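(* Let $\widehat R(x)$ be a $k\times p$ matrix of LODOs with coefficients depending only on $x$, with $k\le p$. Then $\widehat R(x)$ is non-invertible if and only if it has a nontrivial kernel, i.e. there is a column $\mathring\varphi=(\varphi_1(x),\dots,\varphi_p(x))^t\ne0$ of smooth functions with $\widehat R(x)\mathring\varphi(x)=0$.
   Context: $D=d/dx$; a LODO $R(x)=\sum_i r_i(x)D^i$ has coefficients depending only on $x$ (from a differential field of functions). An operator matrix $\widehat R$ of size $k\times p$ is invertible if there is a $p\times k$ operator matrix $\widehat S$ with $\widehat R\widehat S$ and $\widehat S\widehat R$ equal to the identity matrices (of sizes $k$ and $p$). *)

(* Defs.v *)
From HB Require Import structures.
From mathcomp Require Import all_boot all_order all_algebra.
Set Implicit Arguments. Unset Strict Implicit. Unset Printing Implicit Defensive.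
Import Order.TTheory GRing.Theory.
Local Open Scope ring_scope.

(* A LODO  R = sum_i r_i D^i  over a differential field (K, dK) is represented
   by the polynomial  sum_i r_i 'X^i : {poly K}  (coefficient list; 'X stands
   for D).  Addition of operators is polynomial addition; composition is the
   Ore product below, NOT polynomial multiplication. *)

(* Composition:  (sum_i a_i D^i) o (sum_j b_j D^j)
     = sum_{i,j} sum_{l<=i} a_i * C(i,l) * dK^l(b_j) D^(i-l+j)
   (Leibniz rule  D^i b = sum_{l<=i} C(i,l) b^(l) D^(i-l)). *)
Definition lodo_mul (K : fieldType) (dK : K -> K) (P Q : {poly K}) : {poly K} :=
  \sum_(i < size P) \sum_(j < size Q) \sum_(l < i.+1)
     (P`_i * ('C(i, l))%:R * iter l dK Q`_j) *: 'X^(i - l + j).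

Definition opmx_mul (K : fieldType) (dK : K -> K) (k p q : nat)
  (R : 'M[{poly K}]_(k, p)) (S : 'M[{poly K}]_(p, q)) : 'M[{poly K}]_(k, q) :=
  \matrix_(i < k, j < q) \sum_(l < p) lodo_mul dK (R i l) (S l j).

Definition opmx_invertible (K : fieldType) (dK : K -> K) (k p : nat)
  (R : 'M[{poly K}]_(k, p)) : Prop :=
  exists S : 'M[{poly K}]_(p, k),
    opmx_mul dK R S = 1%:M /\ opmx_mul dK S R = 1%:M.

Definition lodo_act (K : fieldType) (F : lmodType K) (dF : F -> F)
  (P : {poly K}) (f : F) : F :=
  \sum_(i < size P) P`_i *: iter i dF f.

Definition opmx_act (K : fieldType) (F : lmodType K) (dF : F -> F) (k p : nat)
  (R : 'M[{poly K}]_(k, p)) (phi : 'cV[F]_p) : 'cV[F]_k :=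
  \col_(i < k) \sum_(j < p) lodo_act dF (R i j) (phi j 0).

(* Main.v *)
Require Import Defs.
From HB Require Import structures.
From mathcomp Require Import all_boot all_order all_algebra.
Set Implicit Arguments. Unset Strict Implicit. Unset Printing Implicit Defensive.
Import GRing.Theory.
Local Open Scope ring_scope.



Record der (K : fieldType) := Der {
  dd : K -> K;
  dd_add : forall a b, dd (a + b) = dd a + dd b;
  dd_mul : forall a b, dd (a * b) = dd a * b + a * dd b }.

Lemma dd0 (K : fieldType) (D : der K) : dd D 0 = 0.
Proof. have h := dd_add D 0 0; rewrite addr0 in h; apply: (addrI (dd D 0)); by rewrite -h addr0. Qed.

Lemma iter_add (F : zmodType) (dF : F -> F) (h : forall f g, dF (f + g) = dF f + dF g) n f g :
  iter n dF (f + g) = iter n dF f + iter n dF g.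
Proof. by elim: n => //= n ->; rewrite h. Qed.

Lemma iter0 (F : zmodType) (dF : F -> F) (h : forall f g, dF (f + g) = dF f + dF g) n :
  iter n dF 0 = 0.
Proof. have h' := iter_add h n 0 0; rewrite addr0 in h'; apply: (addrI (iter n dF 0)); by rewrite -h' addr0. Qed.

Lemma iter_sum (F : zmodType) (dF : F -> F) (h : forall f g, dF (f + g) = dF f + dF g) n
  (I : Type) (r : seq I) (P : pred I) (E : I -> F) :
  iter n dF (\sum_(i <- r | P i) E i) = \sum_(i <- r | P i) iter n dF (E i).
Proof. exact: (big_morph _ (iter_add h n) (iter0 h n)). Qed.

Lemma iter_muln (F : zmodType) (dF : F -> F) (h : forall f g, dF (f + g) = dF f + dF g) n m f :
  iter n dF (f *+ m) = iter n dF f *+ m.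
Proof. elim: m => [|m IH]; first by rewrite !mulr0n iter0. by rewrite !mulrS iter_add // IH. Qed.

Lemma leibniz (K : fieldType) (D : der K) (F : lmodType K) (dF : F -> F)
  (hadd : forall f g, dF (f + g) = dF f + dF g)
  (hsc : forall (a : K) f, dF (a *: f) = dd D a *: f + a *: dF f) n (b : K) (g : F) :
  iter n dF (b *: g) = \sum_(l < n.+1) (iter l (dd D) b *: iter (n - l) dF g) *+ 'C(n, l).
Proof.
elim: n => [|n IH]; first by rewrite big_ord1 /= bin0 mulr1n.
rewrite [LHS]/= IH.
rewrite (big_morph _ hadd (iter0 hadd 1)).
have hmn : forall (f : F) m, dF (f *+ m) = dF f *+ m by move=> f m; exact: (iter_muln hadd 1).
under eq_bigr => l _ do rewrite hmn hsc mulrnDl.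
rewrite big_split /=.
rewrite [in RHS]big_ord_recl /= bin0 mulr1n.
under [in RHS]eq_bigr => l _ do rewrite /bump /= add1n subSS binS mulrnDr.
rewrite big_split /= addrA [LHS]addrC; congr (_ + _).
rewrite [in LHS]big_ord_recl /= bin0 mulr1n subn0; congr (_ + _).
rewrite [in RHS]big_ord_recr /= bin_small // mulr0n addr0.
apply: eq_bigr => l _; rewrite /bump /= add1n.
by rewrite -[in RHS](subnSK (ltn_ord l)).
Qed.


Lemma act_ext (K : fieldType) (F : lmodType K) (dF : F -> F) (P : {poly K}) f N :
  (size P <= N)%N -> lodo_act dF P f = \sum_(i < N) P`_i *: iter i dF f.
Proof.
move=> hN; rewrite /lodo_act (big_ord_widen N (fun i => P`_i *: iter i dF f) hN).
rewrite big_mkcond; apply: eq_bigr => i _; case: ifP => // /negbT.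
by rewrite -leqNgt => h; rewrite nth_default // scale0r.
Qed.

Lemma act_add (K : fieldType) (F : lmodType K) (dF : F -> F) (P Q : {poly K}) f :
  lodo_act dF (P + Q) f = lodo_act dF P f + lodo_act dF Q f.
Proof.
rewrite !(@act_ext _ _ _ _ _ (maxn (size P) (size Q))) ?leq_maxl ?leq_maxr ?size_add //.
by rewrite -big_split; apply: eq_bigr => i _; rewrite coefD scalerDl.
Qed.

Lemma act0 (K : fieldType) (F : lmodType K) (dF : F -> F) f :
  lodo_act dF (0 : {poly K}) f = 0.
Proof. by rewrite /lodo_act size_poly0 big_ord0. Qed.

Lemma act_sum (K : fieldType) (F : lmodType K) (dF : F -> F) f
  (I : Type) (r : seq I) (Pr : pred I) (E : I -> {poly K}) :
  lodo_act dF (\sum_(i <- r | Pr i) E i) f = \sum_(i <- r | Pr i) lodo_act dF (E i) f.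
Proof. exact: (big_morph (fun P => lodo_act dF P f) (fun P Q => act_add dF P Q f) (act0 dF f)). Qed.

Lemma act_scaleX (K : fieldType) (F : lmodType K) (dF : F -> F) (c : K) m f :
  lodo_act dF (c *: 'X^m) f = c *: iter m dF f.
Proof.
rewrite (@act_ext _ _ _ _ _ m.+1); last by rewrite (leq_trans (size_scale_leq _ _)) // size_polyXn.
rewrite big_ord_recr /= big1 ?add0r; first by rewrite coefZ coefXn eqxx mulr1.
by move=> i _; rewrite coefZ coefXn ltn_eqF // mulr0 scale0r.
Qed.

Lemma act_addr (K : fieldType) (F : lmodType K) (dF : F -> F)
  (hadd : forall f g, dF (f + g) = dF f + dF g) (P : {poly K}) f g :
  lodo_act dF P (f + g) = lodo_act dF P f + lodo_act dF P g.
Proof. by rewrite /lodo_act -big_split; apply: eq_bigr => i _; rewrite iter_add // scalerDr. Qed.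

Lemma act_0r (K : fieldType) (F : lmodType K) (dF : F -> F)
  (hadd : forall f g, dF (f + g) = dF f + dF g) (P : {poly K}) :
  lodo_act dF P 0 = 0.
Proof. by rewrite /lodo_act big1 // => i _; rewrite iter0 // scaler0. Qed.

Lemma act_sumr (K : fieldType) (F : lmodType K) (dF : F -> F)
  (hadd : forall f g, dF (f + g) = dF f + dF g) (P : {poly K})
  (I : Type) (r : seq I) (Pr : pred I) (E : I -> F) :
  lodo_act dF P (\sum_(i <- r | Pr i) E i) = \sum_(i <- r | Pr i) lodo_act dF P (E i).
Proof. exact: (big_morph _ (act_addr hadd P) (act_0r hadd P)). Qed.

Lemma act_mul (K : fieldType) (D : der K) (F : lmodType K) (dF : F -> F)
  (hadd : forall f g, dF (f + g) = dF f + dF g)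
  (hsc : forall (a : K) f, dF (a *: f) = dd D a *: f + a *: dF f) (P Q : {poly K}) f :
  lodo_act dF (lodo_mul (dd D) P Q) f = lodo_act dF P (lodo_act dF Q f).
Proof.
rewrite /lodo_mul act_sum [in RHS]/lodo_act; apply: eq_bigr => i _.
rewrite act_sum iter_sum // scaler_sumr; apply: eq_bigr => j _.
rewrite act_sum (leibniz hadd hsc) scaler_sumr; apply: eq_bigr => l _.
by rewrite act_scaleX -scaler_nat !scalerA -iterD mulrA.
Qed.

Lemma dd1 (K : fieldType) (D : der K) : dd D 1 = 0.
Proof.
have h := dd_mul D 1 1; rewrite !mul1r mulr1 in h.
by apply: (addrI (dd D 1)); rewrite -h addr0.
Qed.

Definition pder (K : fieldType) (D : der K) (Q : {poly K}) : {poly K} :=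
  \poly_(i < size Q) dd D Q`_i.

Lemma coef_pder (K : fieldType) (D : der K) Q j : (pder D Q)`_j = dd D Q`_j.
Proof.
rewrite /pder coef_poly; case: ifP => // /negbT; rewrite -leqNgt => h.
by rewrite nth_default // dd0.
Qed.

Definition Dop (K : fieldType) (D : der K) (Q : {poly K}) : {poly K} := 'X * Q + pder D Q.

Lemma Dop_add (K : fieldType) (D : der K) P Q : Dop D (P + Q) = Dop D P + Dop D Q.
Proof.
apply/polyP => j; rewrite !coefD !coef_pder !coefXM !coefD dd_add.
by case: ifP => _; rewrite ?add0r // addrACA.
Qed.

Lemma Dop_scale (K : fieldType) (D : der K) (a : K) (Q : {poly K}) :
  Dop D (a *: Q) = dd D a *: Q + a *: Dop D Q.
Proof.
apply/polyP => j; rewrite !coefD !coefZ !coefD !coef_pder !coefXM !coefZ dd_mul mulrDr.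
by case: ifP => _; rewrite ?mulr0 ?add0r // addrCA.
Qed.

Lemma Dop_iter1 (K : fieldType) (D : der K) i : iter i (Dop D) 1 = 'X^i.
Proof.
elim: i => [|i IH] //=; rewrite IH /Dop exprS.
suff -> : pder D 'X^i = 0 by rewrite addr0.
by apply/polyP => j; rewrite coef_pder coefXn coef0; case: (j == i); rewrite /= ?dd1 ?dd0.
Qed.

Lemma act_one (K : fieldType) (D : der K) (P : {poly K}) : lodo_act (Dop D) P 1 = P.
Proof.
rewrite /lodo_act -[RHS]coefK poly_def; apply: eq_bigr => i _.
by rewrite Dop_iter1.
Qed.

Lemma mul_act (K : fieldType) (D : der K) (P Q : {poly K}) :
  lodo_mul (dd D) P Q = lodo_act (Dop D) P Q.
Proof.
have := act_mul (@Dop_add K D) (@Dop_scale K D) P Q 1.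
by rewrite !act_one.
Qed.

Definition ore (K : fieldType) (D : der K) : Type := {poly K}.
HB.instance Definition _ (K : fieldType) (D : der K) := GRing.Zmodule.on (ore D).

Definition omul (K : fieldType) (D : der K) (P Q : ore D) : ore D := lodo_mul (dd D) P Q.
Definition oone (K : fieldType) (D : der K) : ore D := (1 : {poly K}).

Lemma omulA (K : fieldType) (D : der K) : associative (@omul K D).
Proof.
move=> P Q S; rewrite /omul (mul_act D P) (mul_act D Q) (mul_act D (lodo_mul _ P Q)).
by rewrite (act_mul (@Dop_add K D) (@Dop_scale K D)).
Qed.

Lemma omul1 (K : fieldType) (D : der K) : left_id (oone D) (@omul K D).
Proof.
move=> P; rewrite /omul mul_act /oone (@act_ext _ _ _ _ _ 1) ?size_poly1 //.
by rewrite big_ord1 coef1 eqxx scale1r.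
Qed.

Lemma omulr1 (K : fieldType) (D : der K) : right_id (oone D) (@omul K D).
Proof. by move=> P; rewrite /omul mul_act act_one. Qed.

Lemma omulDl (K : fieldType) (D : der K) : left_distributive (@omul K D) +%R.
Proof. by move=> P Q S; rewrite /omul !mul_act act_add. Qed.

Lemma omulDr (K : fieldType) (D : der K) : right_distributive (@omul K D) +%R.
Proof. by move=> P Q S; rewrite /omul !mul_act (act_addr (@Dop_add K D)). Qed.

Lemma oone_neq0 (K : fieldType) (D : der K) : oone D != 0.
Proof. exact: oner_neq0. Qed.

HB.instance Definition _ (K : fieldType) (D : der K) :=
  GRing.Zmodule_isNzRing.Build (ore D) (@omulA K D) (@omul1 K D) (@omulr1 K D)
    (@omulDl K D) (@omulDr K D) (@oone_neq0 K D).

Lemma ore_mulE (K : fieldType) (D : der K) (P Q : ore D) : P * Q = lodo_mul (dd D) P Q.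
Proof. by []. Qed.


Lemma Dop_size (K : fieldType) (D : der K) (Q : {poly K}) : Q != 0 ->
  size (Dop D Q) = (size Q).+1 /\ lead_coef (Dop D Q) = lead_coef Q.
Proof.
move=> hQ; have hs : size ('X * Q) = (size Q).+1 by rewrite mulrC size_mulX.
have hlt : (size (pder D Q) < size ('X * Q)%R)%N by rewrite hs ltnS size_poly.
rewrite /Dop size_addl // lead_coefDl // hs; split => //.
by rewrite mulrC lead_coefMX.
Qed.

Lemma Dop_iter_size (K : fieldType) (D : der K) (Q : {poly K}) i : Q != 0 ->
  size (iter i (Dop D) Q) = (size Q + i)%N /\ lead_coef (iter i (Dop D) Q) = lead_coef Q.
Proof.
move=> hQ; elim: i => [|i [IH1 IH2]] /=; first by rewrite addn0.
have hne : iter i (Dop D) Q != 0.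
  by rewrite -size_poly_eq0 IH1 addn_eq0 size_poly_eq0 (negbTE hQ).
by have [-> ->] := Dop_size D hne; rewrite IH1 addnS IH2.
Qed.

Lemma mul_size (K : fieldType) (D : der K) (b Y : {poly K}) : b != 0 -> Y != 0 ->
  size (lodo_mul (dd D) b Y) = (size Y + (size b).-1)%N /\
  lead_coef (lodo_mul (dd D) b Y) = lead_coef b * lead_coef Y.
Proof.
move=> hb hY; rewrite mul_act /lodo_act.
have hsb := polySpred hb; move: hsb; set n := (size b).-1 => hsb.
rewrite hsb big_ord_recr /=.
have hbn : b`_n != 0 by rewrite -lead_coef_eq0 in hb; rewrite /lead_coef hsb /= in hb.
have [hs1 hl1] := Dop_iter_size D n hY.
have hlast : size (b`_n *: iter n (Dop D) Y) = (size Y + n)%N by rewrite size_scale.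
have hrest : (size (\sum_(i < n) b`_i *: iter i (Dop D) Y)%R < size Y + n)%N.
  rewrite (leq_ltn_trans (size_sum _ _ _)) //.
  case: n {hsb hbn hs1 hl1 hlast} => [|n]; first by rewrite big_ord0 addn0 lt0n size_poly_eq0.
  rewrite addnS ltnS; apply/bigmax_leqP => i _.
  rewrite (leq_trans (size_scale_leq _ _)) //.
  have [-> _] := Dop_iter_size D i hY.
  by rewrite leq_add2l -ltnS.
rewrite addrC size_addl ?hlast // lead_coefDl ?hlast //.
by rewrite lead_coefZ hl1 /lead_coef hsb.
Qed.

Lemma lmul0 (K : fieldType) (D : der K) (b : {poly K}) : lodo_mul (dd D) b 0 = 0.
Proof. by rewrite mul_act (act_0r (@Dop_add K D)). Qed.

Lemma lmulD (K : fieldType) (D : der K) (b p q : {poly K}) :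
  lodo_mul (dd D) b (p + q) = lodo_mul (dd D) b p + lodo_mul (dd D) b q.
Proof. by rewrite !mul_act (act_addr (@Dop_add K D)). Qed.

Lemma size_sub_lt (K : fieldType) (a c : {poly K}) : a != 0 -> size c = size a ->
  lead_coef c = lead_coef a -> (size (a - c)%R < size a)%N.
Proof.
move=> ha hs hl; have hsa := polySpred ha.
suff : (size (a - c)%R <= (size a).-1)%N by rewrite {2}hsa ltnS.
apply/leq_sizeP => j hj; rewrite coefB.
case: (ltngtP j (size a).-1) => hj'.
- by move: (leq_ltn_trans hj hj'); rewrite ltnn.
- rewrite !nth_default ?subr0 //; first by rewrite hs hsa.
  by rewrite hsa.
- by rewrite hj'; move: hl; rewrite /lead_coef hs => ->; rewrite subrr.
Qed.

Lemma odiv (K : fieldType) (D : der K) (b a : {poly K}) : b != 0 ->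
  exists q, (size (a - lodo_mul (dd D) b q)%R < size b)%N /\
            (size (a - lodo_mul (dd D) b q)%R <= size a)%N.
Proof.
move=> hb; elim: {a}(size a).+1 {-2}a (ltnSn (size a)) => // n IH a ha.
case: (ltnP (size a) (size b)) => hab.
  by exists 0; rewrite lmul0 subr0.
have hbs := polySpred hb.
have ha0 : a != 0 by rewrite -size_poly_eq0 -lt0n (leq_trans _ hab) // hbs.
set m := (size a - size b)%N; set c := lead_coef a / lead_coef b.
have hc : c != 0 by rewrite mulf_neq0 ?invr_eq0 ?lead_coef_eq0.
set Y := c *: 'X^m.
have hY : Y != 0 by rewrite scaler_eq0 negb_or hc /= -size_poly_eq0 size_polyXn.
have [hs hl] := mul_size D hb hY.
have hsY : size Y = m.+1 by rewrite size_scale // size_polyXn.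
have hlY : lead_coef Y = c by rewrite lead_coefZ lead_coefXn mulr1.
have hs' : size (lodo_mul (dd D) b Y) = size a.
  by rewrite hs hsY addSn -addnS -hbs subnK.
have hl' : lead_coef (lodo_mul (dd D) b Y) = lead_coef a.
  by rewrite hl hlY /c mulrC divfK // lead_coef_eq0.
have hlt := size_sub_lt ha0 hs' hl'.
have [q' [h1 h2]] := IH (a - lodo_mul (dd D) b Y) (leq_trans hlt ha).
exists (Y + q'); rewrite lmulD opprD addrA; split => //.
by rewrite (leq_trans h2) // ltnW.
Qed.



Lemma omulC (K : fieldType) (D : der K) (c : K) (Q : {poly K}) :
  lodo_mul (dd D) c%:P Q = c *: Q.
Proof.
rewrite mul_act (@act_ext _ _ _ _ _ 1) ?size_polyC_leq1 //.
by rewrite big_ord1 coefC eqxx.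
Qed.

Definition isU (K : fieldType) (D : der K) (u : ore D) : bool := size (u : {poly K}) == 1%N.
Definition uinv (K : fieldType) (D : der K) (u : ore D) : ore D :=
  ((lead_coef (u : {poly K}))^-1)%:P.

Lemma isU_inv (K : fieldType) (D : der K) (u : ore D) :
  isU u -> u * uinv u = 1 /\ uinv u * u = 1.
Proof.
move=> /size_poly1P [c hc hu]; rewrite /uinv hu lead_coefC !ore_mulE !omulC.
by rewrite !scale_polyC mulfV // mulVf.
Qed.

Definition inv_mx (R : nzRingType) n (U : 'M[R]_n) :=
  exists V : 'M[R]_n, U *m V = 1%:M /\ V *m U = 1%:M.

Lemma inv_mx1 (R : nzRingType) n : inv_mx (1%:M : 'M[R]_n).
Proof. by exists 1%:M; rewrite mul1mx. Qed.

Lemma inv_mxM (R : nzRingType) n (U V : 'M[R]_n) : inv_mx U -> inv_mx V -> inv_mx (U *m V).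
Proof.
move=> [U' [h1 h2]] [V' [h3 h4]]; exists (V' *m U'); split.
  by rewrite mulmxA -(mulmxA U) h3 mulmx1 h1.
by rewrite mulmxA -(mulmxA V') h2 mulmx1 h4.
Qed.

Lemma inv_mxN (R : nzRingType) n (N : 'M[R]_n) : N *m N = 0 -> inv_mx (1%:M + N).
Proof.
move=> hN; exists (1%:M - N); split.
  by rewrite mulmxDl !mulmxBr !mul1mx !mulmx1 hN subr0 subrK.
by rewrite mulmxBl !mulmxDr !mul1mx !mulmx1 hN addr0 addrK.
Qed.

Lemma inv_mx_diag (R : nzRingType) n (V : 'M[R]_n) :
  inv_mx V -> inv_mx (block_mx (1%:M : 'M_1) 0 0 V).
Proof.
move=> [V' [h1 h2]]; exists (block_mx 1%:M 0 0 V').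
rewrite !mulmx_block !mulmx0 !mul0mx !mulmx1 h1 h2 !addr0 !add0r.
by rewrite -!scalar_mx_block.
Qed.

Lemma inv_mx_tri (R : nzRingType) n (X : 'M[R]_(n, 1)) :
  inv_mx (block_mx (1%:M : 'M_1) 0 X 1%:M).
Proof.
exists (block_mx 1%:M 0 (- X) 1%:M).
rewrite !mulmx_block !mulmx0 !mul0mx !mulmx1 !mul1mx !addr0 !add0r addNr addrN.
by rewrite -!scalar_mx_block.
Qed.

Lemma mxact_mul (K : fieldType) (D : der K) (F : lmodType K) (dF : F -> F)
  (hadd : forall f g, dF (f + g) = dF f + dF g)
  (hsc : forall (a : K) f, dF (a *: f) = dd D a *: f + a *: dF f) k p q
  (M : 'M[ore D]_(k, p)) (N : 'M[ore D]_(p, q)) (phi : 'cV[F]_q) :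
  opmx_act dF (M *m N) phi = opmx_act dF M (opmx_act dF N phi).
Proof.
apply/matrixP => i z; rewrite !mxE.
under eq_bigr => j _ do rewrite mxE act_sum.
under [RHS]eq_bigr => l _ do rewrite mxE (act_sumr hadd).
rewrite exchange_big /=; apply: eq_bigr => l _; apply: eq_bigr => j _.
by rewrite ore_mulE (act_mul hadd hsc).
Qed.

Lemma mxact1 (K : fieldType) (D : der K) (F : lmodType K) (dF : F -> F)
  (hadd : forall f g, dF (f + g) = dF f + dF g) p (phi : 'cV[F]_p) :
  opmx_act dF (1%:M : 'M[ore D]_p) phi = phi.
Proof.
apply/matrixP => i z; rewrite !mxE (bigD1 i) //= big1 ?addr0.
  rewrite mxE eqxx mulr1n (@act_ext _ _ _ _ _ 1) ?size_poly1 //.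
  by rewrite big_ord1 coef1 eqxx scale1r /=; case: z => [[]] // ?; congr (phi _ _); apply: val_inj.
move=> j hj; rewrite mxE eq_sym (negbTE hj) mulr0n.
by rewrite act0.
Qed.

Lemma mxact0 (K : fieldType) (D : der K) (F : lmodType K) (dF : F -> F)
  (hadd : forall f g, dF (f + g) = dF f + dF g) k p (M : 'M[ore D]_(k, p)) :
  opmx_act dF M 0 = 0.
Proof.
apply/matrixP => i z; rewrite !mxE big1 // => j _; rewrite mxE.
exact: act_0r.
Qed.

Definition Nmx (R : nzRingType) n (a : 'I_n) (w : 'I_n -> R) : 'M[R]_n :=
  \matrix_(i, j) (if (i == a) && (j != a) then w j else 0).

Lemma NmxK (R : nzRingType) n (a : 'I_n) (w : 'I_n -> R) : Nmx a w *m Nmx a w = 0.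
Proof.
apply/matrixP => i j; rewrite !mxE big1 // => l _; rewrite !mxE.
by case: (l =P a) => [->|_]; rewrite ?eqxx ?andbF ?mul0r ?mulr0 //= andbF mul0r.
Qed.

Lemma rowNmx (R : nzRingType) n (a : 'I_n) (w : 'I_n -> R) (r : 'rV[R]_n) j :
  (r *m (1%:M + Nmx a w)) 0 j = r 0 j + (if j != a then r 0 a * w j else 0).
Proof.
rewrite mulmxDr mulmx1 mxE; congr (_ + _); rewrite mxE (bigD1 a) //= big1 ?addr0.
  by rewrite mxE eqxx /=; case: ifP => //; rewrite mulr0.
by move=> l hl; rewrite mxE (negbTE hl) mulr0.
Qed.

Definition msr (K : fieldType) (D : der K) n (r : 'rV[ore D]_n) : nat :=
  (\sum_(j < n) size (r ord0 j : {poly K}))%N.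

Lemma sum_lt (n : nat) (f g : 'I_n -> nat) (j : 'I_n) :
  (forall i, f i <= g i)%N -> (f j < g j)%N -> (\sum_i f i < \sum_i g i)%N.
Proof.
move=> hle hlt; rewrite (bigD1 j) //= [X in (_ < X)%N](bigD1 j) //=.
by rewrite -addSn leq_add // leq_sum.
Qed.

Lemma rowred (K : fieldType) (D : der K) m (r : 'rV[ore D]_m.+1) :
  exists U, inv_mx U /\ forall j, j != 0 -> (r *m U) ord0 j = 0.
Proof.
move: {2}(msr r).+1 (ltnSn (msr r)) => Nm; elim: Nm r => // Nm IH r hNm.
case: (boolP [forall j, (j != 0) ==> (r ord0 j == 0)]) => [/forallP hall|].
  by exists 1%:M; split; [exact: inv_mx1| move=> j hj; rewrite mulmx1; apply/eqP; exact: (implyP (hall j))].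
move/forallPn => [j1]; rewrite negb_imply => /andP [hj1 hr1].
case: (@arg_minnP _ j1 (fun j => r ord0 j != 0) (fun j => size (r ord0 j : {poly K})) hr1) => j0 hj0 hmin.
case: (boolP [exists j, (j != j0) && (r ord0 j != 0)]) => [/existsP [j2 /andP [hj2 hr2]]|hnone].
- have hq : forall j : 'I_m.+1, exists q : {poly K},
      (size ((r ord0 j : {poly K}) - lodo_mul (dd D) (r ord0 j0) q)%R < size (r ord0 j0 : {poly K}))%N /\
      (size ((r ord0 j : {poly K}) - lodo_mul (dd D) (r ord0 j0) q)%R <= size (r ord0 j : {poly K}))%N.
    by move=> j; apply: odiv.
  have [q hq'] := fin_all_exists hq.
  pose U := 1%:M + Nmx j0 (fun j => - (q j : ore D)).
  have hU : inv_mx U by apply: inv_mxN; exact: NmxK.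
  have hr' : forall j, (r *m U) ord0 j = if j != j0 then (r ord0 j : {poly K}) - lodo_mul (dd D) (r ord0 j0) (q j) else r ord0 j.
    by move=> j; rewrite rowNmx; case: ifP => _; rewrite ?addr0 // mulrN.
  have hlt : (msr (r *m U) < msr r)%N.
    apply: (@sum_lt _ _ _ j2) => [i|]; rewrite hr'.
      by case: ifP => _ //; case: (hq' i).
    rewrite hj2; case: (hq' j2) => h1 _; apply: (leq_trans h1).
    by apply: hmin.
  have [U' [hU' hz]] := IH (r *m U) (leq_trans hlt (hNm : (msr r < Nm.+1)%N)).
  exists (U *m U'); split; first exact: inv_mxM.
  by move=> j hj; rewrite mulmxA hz.
- have hz : forall j, j != j0 -> r ord0 j = 0.
    move=> j hj; apply/eqP; apply: contraNT hnone => hj'.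
    by apply/existsP; exists j; rewrite hj.
  have hj10 : j1 = j0 by apply/eqP; apply: contraNT hr1 => h; rewrite hz // eq_sym.
  have hj0n : j0 != 0 by rewrite -hj10.
  pose U1 := 1%:M + Nmx j0 (fun j : 'I_m.+1 => ((j == 0)%:R : ore D)).
  pose U2 := 1%:M + Nmx 0 (fun j : 'I_m.+1 => if j == j0 then -1 else (0 : ore D)).
  exists (U1 *m U2); split; first by apply: inv_mxM; apply: inv_mxN; exact: NmxK.
  move=> j hj; rewrite mulmxA rowNmx hj !rowNmx (negbTE hj).
  have hj0n' : (0 != j0) by rewrite eq_sym.
  rewrite hj0n' eqxx mulr1 (hz 0) // add0r mulr0n mulr0.
  case: (j =P j0) => [->|/eqP hjj0]; first by rewrite /= ?eqxx /= addr0 mulrN1 subrr.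
  by rewrite /= addr0 mulr0 addr0 hz.
Qed.

Definition NF (K : fieldType) (D : der K) n (L : 'M[ore D]_n) : Prop :=
  (forall i j : 'I_n, (i < j)%N -> L i j = 0) /\
  (forall i j : 'I_n, i != j -> isU (L i i) -> L i j = 0 /\ L j i = 0).

Lemma NF_block (K : fieldType) (D : der K) n (g : 'M[ore D]_1) (a : 'M[ore D]_(n, 1))
  (L : 'M[ore D]_n) : NF L -> (forall i, isU (L i i) -> a i 0 = 0) ->
  (isU (g 0 0) -> forall i, a i 0 = 0) -> NF (block_mx g 0 a L).
Proof.
move=> [hL1 hL2] ha hg; split.
- move=> i j; case: (split_ordP i) => i' ->; case: (split_ordP j) => j' -> /=.
  + by rewrite !ord1 ltnn.
  + by rewrite block_mxEur mxE.
  + by rewrite ord1 /= ltnNge leq_addr.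
  + by rewrite block_mxEdr ltn_add2l; apply: hL1.
- move=> i j; case: (split_ordP i) => i' ->; case: (split_ordP j) => j' -> /=.
  + by rewrite !ord1 eqxx.
  + rewrite block_mxEul block_mxEur block_mxEdl mxE (ord1 i') => _ hu.
    by split => //; apply: hg.
  + rewrite block_mxEdr block_mxEdl block_mxEur mxE (ord1 j') => _ hu.
    by split => //; apply: ha.
  + rewrite !block_mxEdr => hne hu.
    by apply: hL2 => //; apply: contraNneq hne => ->.
Qed.

Lemma NFex (K : fieldType) (D : der K) n (M : 'M[ore D]_n) :
  exists U V, inv_mx U /\ inv_mx V /\ NF (V *m M *m U).
Proof.
elim: n M => [|n IH] M.
  exists 1%:M, 1%:M; split; first exact: inv_mx1; split; first exact: inv_mx1.
  by split => [[]|[]].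
have [U1 [hU1 hz]] := rowred (row 0 M).
set M1 := M *m U1.
have hur : ursubmx (M1 : 'M_(1 + n)) = 0.
  apply/matrixP => i j; rewrite !mxE (ord1 i).
  have -> : lshift n (0 : 'I_1) = 0 by apply: val_inj.
  have hne : rshift 1 j != 0 :> 'I_(1 + n) by apply/eqP => /(congr1 val).
  by have := hz _ hne; rewrite -row_mul !mxE.
set g := ulsubmx (M1 : 'M_(1 + n)); set a := dlsubmx (M1 : 'M_(1 + n)).
set M2 := drsubmx (M1 : 'M_(1 + n)).
have hM1 : (M1 : 'M_(1 + n)) = block_mx g 0 a M2 by rewrite -hur submxK.
have [U'' [V'' [hU'' [hV'' hNF]]]] := IH M2.
set L := V'' *m M2 *m U''.
set a' := V'' *m a.
pose U2 : 'M[ore D]_(1 + n) := block_mx 1%:M 0 0 U''.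
pose V2 : 'M[ore D]_(1 + n) := block_mx 1%:M 0 0 V''.
have hB : V2 *m (M1 : 'M_(1 + n)) *m U2 =
          block_mx g 0 a' L.
  rewrite hM1 /U2 /V2 !mulmx_block !mulmx0 !mul0mx !mul1mx !mulmx1 !addr0 !add0r.
  by rewrite mul0mx.
have hass : forall (V3 U3 : 'M[ore D]_(1 + n)),
   (V3 *m V2) *m M *m (U1 *m U2 *m U3) =
   V3 *m (block_mx g 0 a' L) *m U3.
  by move=> V3 U3; rewrite -hB /M1 !mulmxA.
have {}hNF : NF L := hNF.
clearbody a' L.
case: (boolP (isU (g 0 0))) => hg.
- set ginv : 'M[ore D]_1 := (uinv (g 0 0))%:M.
  exists (U1 *m U2 *m 1%:M),
         (block_mx 1%:M 0 (- (a' *m ginv)) 1%:M *m V2).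
  split; first by rewrite mulmx1; apply: inv_mxM => //; exact: inv_mx_diag.
  split; first by apply: inv_mxM; [exact: inv_mx_tri| exact: inv_mx_diag].
  rewrite hass mulmx1 mulmx_block !mulmx0 !mul0mx !mul1mx !addr0 !add0r.
  have hgi : ginv *m g = 1%:M.
    apply/matrixP => i j; rewrite (ord1 i) (ord1 j) !mxE big_ord1 !mxE eqxx mulr1n.
    by have [_ h] := isU_inv hg; move: h; rewrite !mxE => ->.
  rewrite mulNmx -mulmxA hgi mulmx1 addNr.
  by apply: (@NF_block K D n g 0 L hNF) => [i _|_ i]; rewrite mxE.
- pose c : 'M[ore D]_(n, 1) := \matrix_(i, j) (if isU (L i i) then uinv (L i i) * a' i j else 0).
  exists (U1 *m U2 *m block_mx 1%:M 0 (- c) 1%:M),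
         (1%:M *m V2).
  split; first by apply: inv_mxM; [apply: inv_mxM => //; exact: inv_mx_diag | exact: inv_mx_tri].
  split; first by rewrite mul1mx; exact: inv_mx_diag.
  rewrite hass mul1mx mulmx_block !mulmx0 !mul0mx !mulmx1 !addr0 !add0r.
  apply: (NF_block hNF); last by move=> hg'; rewrite hg' in hg.
  move=> i hu; rewrite mulmxN mxE; set LC := L *m c; rewrite mxE /LC mxE (bigD1 i) //= big1.
    rewrite addr0 mxE hu mulrA; have [-> _] := isU_inv hu.
    by rewrite mul1r subrr.
  move=> l hl; rewrite mxE; case: ifP => _; last by rewrite mulr0.
  have hil : i != l by rewrite eq_sym.
  by have [-> _] := (proj2 hNF) i l hil hu; rewrite mul0r.
Qed.



Lemma opmx_mulE (K : fieldType) (D : der K) k p q (R : 'M[{poly K}]_(k, p))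
  (S : 'M[{poly K}]_(p, q)) :
  opmx_mul (dd D) R S = ((R : 'M[ore D]_(k, p)) *m (S : 'M[ore D]_(p, q))).
Proof. by apply/matrixP => i j; rewrite !mxE. Qed.

Lemma oneE (K : fieldType) (D : der K) n :
  (1%:M : 'M[{poly K}]_n) = (1%:M : 'M[ore D]_n).
Proof. by apply/matrixP => i j; rewrite !mxE. Qed.

Lemma core (K : fieldType) (D : der K) (F : lmodType K) (dF : F -> F)
  (hadd : forall f g, dF (f + g) = dF f + dF g)
  (hsc : forall (a : K) f, dF (a *: f) = dd D a *: f + a *: dF f)
  (F_rich : forall P : {poly K}, (1 < size P)%N ->
              exists2 f : F, f != 0 & lodo_act dF P f = 0)
  n (M : 'M[ore D]_n) :
  (exists S : 'M[ore D]_n, M *m S = 1%:M /\ S *m M = 1%:M) \/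
  exists2 phi : 'cV[F]_n, phi != 0 & opmx_act dF M phi = 0.
Proof.
have [U [V [[U' [hU1 hU2]] [[V' [hV1 hV2]] [hNF1 hNF2]]]]] := NFex M.
set L := V *m M *m U in hNF1 hNF2.
have hM : M = V' *m L *m U'.
  by rewrite /L !mulmxA hV2 mul1mx -mulmxA hU1 mulmx1.
clearbody L.
case: (boolP [forall i, isU (L i i)]) => [/forallP hall | /forallPn [i0 hi0]].
- left; pose Li : 'M[ore D]_n := \matrix_(i, j) (if i == j then uinv (L i i) else 0).
  have hLd : forall i j, i != j -> L i j = 0 by move=> i j hij; case: (hNF2 i j hij (hall i)).
  have hLLi : L *m Li = 1%:M.
    apply/matrixP => i j; rewrite !mxE (bigD1 i) //= big1 ?addr0.
      rewrite mxE; case: (eqVneq i j) => [hij|hij]; last by rewrite mulr0.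
      by subst j; rewrite ?eqxx; have [-> _] := isU_inv (hall i).
    by move=> l hl; rewrite hLd 1?eq_sym // mul0r.
  have hLiL : Li *m L = 1%:M.
    apply/matrixP => i j; rewrite !mxE (bigD1 i) //= big1 ?addr0.
      rewrite mxE eqxx; case: (eqVneq i j) => [hij|hij]; last by rewrite (hLd i j hij) mulr0 ?(negbTE hij).
      by subst j; rewrite ?eqxx; have [_ ->] := isU_inv (hall i).
    by move=> l hl; rewrite mxE eq_sym (negbTE hl) mul0r.
  exists (U *m Li *m V); split.
    rewrite hM !mulmxA -(mulmxA (V' *m L) U' U) hU2 mulmx1.
    by rewrite -(mulmxA V' L Li) hLLi mulmx1 hV2.
  rewrite hM !mulmxA -(mulmxA (U *m Li) V V') hV1 mulmx1.
  by rewrite -(mulmxA U Li L) hLiL mulmx1 hU1.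
- right.
  case: (@arg_maxnP _ i0 (fun i => ~~ isU (L i i)) (fun i => val i) hi0) => i hi hmax.
  have [f hf0 hf] : exists2 f : F, f != 0 & lodo_act dF (L i i) f = 0.
    case: (eqVneq (L i i) 0) => h.
      have [f hf0 _] : exists2 f : F, f != 0 & lodo_act dF 'X f = 0.
        by apply: F_rich; rewrite size_polyX.
      by exists f => //; rewrite h act0.
    apply: F_rich; rewrite ltn_neqAle eq_sym hi lt0n size_poly_eq0.
    exact: h.
  pose phi' : 'cV[F]_n := \col_j (if j == i then f else 0).
  have hphi' : phi' != 0.
    apply/eqP => /matrixP /(_ i 0); rewrite !mxE eqxx => h.
    by rewrite h eqxx in hf0.
  have hL : opmx_act dF L phi' = 0.
    apply/matrixP => j z; rewrite !mxE (bigD1 i) //= big1 ?addr0.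
      rewrite mxE eqxx; case: (ltngtP j i) => hji.
      + by rewrite hNF1 // act0.
      + have hu : isU (L j j).
          by apply: contraTT hji => hnu; rewrite -leqNgt; exact: hmax.
        have hne : j != i by apply: contraTneq hji => ->; rewrite ltnn.
        by have [-> _] := hNF2 j i hne hu; rewrite act0.
      + by have -> : j = i by apply: val_inj.
    by move=> l hl; rewrite mxE (negbTE hl) (act_0r hadd).
  exists (opmx_act dF U phi').
    apply: contraNneq hphi' => h0.
    have : opmx_act dF U' (opmx_act dF U phi') = phi'.
      by rewrite -(mxact_mul hadd hsc) hU2 (mxact1 _ hadd).
    by rewrite h0 (mxact0 hadd) => <-.
  rewrite -(mxact_mul hadd hsc) hM -(mulmxA (V' *m L) U' U) hU2 mulmx1.
  by rewrite (mxact_mul hadd hsc) hL (mxact0 hadd).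
Qed.

Theorem lemma2
  (K : fieldType) (dK : K -> K)
  (dK_add : forall a b : K, dK (a + b) = dK a + dK b)
  (dK_mul : forall a b : K, dK (a * b) = dK a * b + a * dK b)
  (F : lmodType K) (dF : F -> F)
  (dF_add : forall f g : F, dF (f + g) = dF f + dF g)
  (dF_scale : forall (a : K) (f : F), dF (a *: f) = dK a *: f + a *: dF f)
  (F_rich : forall P : {poly K}, (1 < size P)%N ->
              exists2 f : F, f != 0 & lodo_act dF P f = 0)
  (k p : nat) (Hkp : (k <= p)%N) (R : 'M[{poly K}]_(k, p)) :
  ~ opmx_invertible dK R <->
  exists2 phi : 'cV[F]_p, phi != 0 & opmx_act dF R phi = 0.
Proof.
pose D := @Der K dK dK_add dK_mul.
have hsc : forall (a : K) f, dF (a *: f) = dd D a *: f + a *: dF f by [].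
split; last first.
  move=> [phi hphi0 hphi] [S [_ h2]].
  rewrite (opmx_mulE D) (oneE D) in h2.
  have := mxact1 D dF_add phi; rewrite -h2 (mxact_mul dF_add hsc) hphi (mxact0 (D:=D) dF_add) => h.
  by rewrite -h eqxx in hphi0.
move=> hni.
case: (ltngtP k p) => hkp; last 2 first.
- by move: hkp Hkp; rewrite ltnNge => /negbTE ->.
- subst k.
  case: (core dF_add hsc F_rich (R : 'M[ore D]_p)) => [[S [h1 h2]]|] //.
  by case: hni; exists S; rewrite !(opmx_mulE D) (oneE D).
pose M : 'M[ore D]_p := \matrix_(i, j) oapp (fun i' : 'I_k => (R i' j : ore D)) 0 (insub (val i)).
case: (core dF_add hsc F_rich M) => [[S [h1 h2]]|[phi hphi0 hphi]].
  pose i0 : 'I_p := Ordinal hkp.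
  have := congr1 (fun A : 'M[ore D]_p => A i0 i0) h1; rewrite !mxE big1 ?eqxx.
    by move=> /eqP; rewrite eq_sym oner_eq0.
  by move=> l _; rewrite mxE insubF ?ltnn //= mul0r.
exists phi => //.
apply/matrixP => i z; have := congr1 (fun A : 'cV[F]_p => A (widen_ord Hkp i) z) hphi.
rewrite !mxE => h; rewrite -[RHS]h; apply: eq_bigr => j _; rewrite mxE /=.
by rewrite valK.
Qed.
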